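(* Let $p>0$, $b\ge1$, and let $D(t)=\frac{(2b+1)^p}{2^p\Gamma(p)}\int_0^t s^{p-1}e^{-(b+\frac12)s}ds$, $t\ge0$. Let $f:\mathbb{R}\to\mathbb{R}$ be defined on $[0,1)$ as the inverse of the increasing bijection $[1,\infty)\ni t\mapsto D(\log t)\in[0,1)$, and $f=0$ outside $[0,1)$. Take $c=0$, $u(x)=x$ (so $\beta=1$). Then $\int_{\mathrm{supp}(f)}|f(s)|^{\beta+\frac{c-1}{2}}ds<\infty$, and there is $\gamma>0$ with $|m_{f,\pm}(x)|\ge\gamma(1+|x|)^{-p}$ for all $x\in\mathbb{R}$.
   Context: $m_{f,+}(x)=\int_{\mathrm{supp}(f)} u(f(s))|f(s)|^{(c-1)/2}e^{-ix\log|f(s)|}ds$, $m_{f,-}(x)=\int_{\mathrm{supp}(f)} u(f(s))|f(s)|^{(c-1)/2}e^{-ix\log|f(s)|}\,\mathrm{sgn}f(s)\,ds$, where $\mathrm{supp}(f)=\{f\ne0\}$. *)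

(* Defs.v *)
From Stdlib Require Import Reals Lra.
Open Scope R_scope.

Definition improper_int (g : R -> R) (a b L : R) : Prop :=
  a < b /\
  (forall u v, a < u -> u <= v -> v < b -> inhabited (Riemann_integrable g u v)) /\
  (forall eps, 0 < eps -> exists d, 0 < d /\
     forall u v (pr : Riemann_integrable g u v),
       a < u -> u < a + d -> b - d < v -> v < b -> u <= v ->
       Rabs (RiemannInt pr - L) < eps).

Definition improper_int_inf (g : R -> R) (a L : R) : Prop :=
  (forall u v, a < u -> u <= v -> inhabited (Riemann_integrable g u v)) /\
  (forall eps, 0 < eps -> exists d M, 0 < d /\
     forall u v (pr : Riemann_integrable g u v),
       a < u -> u < a + d -> M < v -> u <= v ->
       Rabs (RiemannInt pr - L) < eps).

Definition IsGamma (p G : R) : Prop :=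
  improper_int_inf (fun s => Rpower s (p - 1) * exp (- s)) 0 G.

Definition D_rel (p b G t y : R) : Prop :=
  (t = 0 /\ y = 0) \/
  (0 < t /\ exists L,
     improper_int (fun s => Rpower s (p - 1) * exp (- (b + / 2) * s)) 0 t L /\
     y = Rpower (2 * b + 1) p / (Rpower 2 p * G) * L).

Definition Rsgn (y : R) : R :=
  if Rlt_dec 0 y then 1 else if Rlt_dec y 0 then -1 else 0.

(* Real and imaginary parts of the integrand of m_{f,+} (sg = false)
   and m_{f,-} (sg = true):
   u(f s) |f s|^((c-1)/2) e^{-i x log|f s|} (sgn f s). *)
Definition m_integrand_re (u : R -> R) (c : R) (f : R -> R) (sg : bool)
  (x s : R) : R :=
  u (f s) * Rpower (Rabs (f s)) ((c - 1) / 2) * cos (x * ln (Rabs (f s)))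
  * (if sg then Rsgn (f s) else 1).

Definition m_integrand_im (u : R -> R) (c : R) (f : R -> R) (sg : bool)
  (x s : R) : R :=
  - (u (f s) * Rpower (Rabs (f s)) ((c - 1) / 2) * sin (x * ln (Rabs (f s)))
  * (if sg then Rsgn (f s) else 1)).

(* Main.v *)
Require Import Defs.
From Stdlib Require Import Reals Lra Classical.
From Coquelicot Require Import Coquelicot.
Open Scope R_scope.

Definition rr (p w : R) : R := if Rlt_dec 0 w then Rpower w (/ p) else 0.

Lemma rr_nonpos p w : w <= 0 -> rr p w = 0.
Proof. intros H; unfold rr; destruct (Rlt_dec 0 w); [lra|auto]. Qed.

Lemma rr_pos p w : 0 < w -> rr p w = Rpower w (/ p).
Proof. intros H; unfold rr; destruct (Rlt_dec 0 w); [auto|lra]. Qed.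

Lemma Rpower_pos x y : 0 < Rpower x y.
Proof. unfold Rpower; apply exp_pos. Qed.

Lemma rr_gt0 p w : 0 < w -> 0 < rr p w.
Proof. intros H; rewrite rr_pos; auto; apply Rpower_pos. Qed.

Lemma rr_ge0 p w : 0 <= rr p w.
Proof. destruct (Rlt_dec 0 w). left; apply rr_gt0; auto. rewrite rr_nonpos; lra. Qed.

Lemma rr_Rpower p t : 0 < p -> 0 < t -> rr p (Rpower t p) = t.
Proof. intros hp ht; rewrite rr_pos by apply Rpower_pos.
 rewrite Rpower_mult. replace (p * / p) with 1 by (field; lra). apply Rpower_1; auto. Qed.

Lemma Rpower_rr p w : 0 < p -> 0 < w -> Rpower (rr p w) p = w.
Proof. intros hp hw; rewrite rr_pos by auto. rewrite Rpower_mult.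
 replace (/ p * p) with 1 by (field; lra). apply Rpower_1; auto. Qed.

Lemma rr_lt p v w : 0 < p -> 0 < w -> v < w -> rr p v < rr p w.
Proof. intros hp hw hvw. destruct (Rlt_dec 0 v).
 rewrite !rr_pos by auto. apply Rlt_Rpower_l. apply Rinv_0_lt_compat; auto. lra.
 rewrite (rr_nonpos p v) by lra. apply rr_gt0; auto. Qed.

Lemma rr_le p v w : 0 < p -> v <= w -> rr p v <= rr p w.
Proof. intros hp hvw. destruct (Rlt_dec 0 w).
 destruct hvw. left; apply rr_lt; auto. subst; lra.
 rewrite !rr_nonpos by lra. lra. Qed.

Lemma rr_cont p w : 0 < p -> continuity_pt (rr p) w.
Proof.
 intros hp. destruct (Rtotal_order w 0) as [H|[H|H]].
 - apply (continuity_pt_locally_ext (fun _ => 0) _ (-w)). lra.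
   intros y Hy. unfold Rdist in Hy. rewrite rr_nonpos; auto.
   apply Rabs_def2 in Hy. lra. apply continuity_pt_const; intros ? ?; auto.
 - subst. intros eps Heps. exists (Rpower eps p). split. apply Rpower_pos.
   intros x [_ Hx]. simpl in *. unfold R_dist in *. rewrite (rr_nonpos p 0) by lra.
   rewrite Rminus_0_r in *. rewrite Rabs_pos_eq by apply rr_ge0.
   destruct (Rlt_dec 0 x).
   + rewrite Rabs_pos_eq in Hx by lra. rewrite <- (rr_Rpower p eps) by auto.
     apply rr_lt; auto. apply Rpower_pos.
   + rewrite rr_nonpos by lra. auto.
 - apply (continuity_pt_locally_ext (fun x => Rpower x (/ p)) _ w). lra.
   intros y Hy. unfold Rdist in Hy. apply Rabs_def2 in Hy.
   rewrite rr_pos; auto. lra.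
   apply derivable_continuous_pt. exists (/ p * Rpower w (/ p - 1)).
   apply derivable_pt_lim_power; auto.
Qed.

Lemma cp_mult f g x: continuity_pt f x -> continuity_pt g x -> continuity_pt (fun y => f y * g y) x.
Proof. intros; apply (continuity_pt_mult f g); auto. Qed.
Lemma cp_plus f g x: continuity_pt f x -> continuity_pt g x -> continuity_pt (fun y => f y + g y) x.
Proof. intros; apply (continuity_pt_plus f g); auto. Qed.
Lemma cp_minus f g x: continuity_pt f x -> continuity_pt g x -> continuity_pt (fun y => f y - g y) x.
Proof. intros; apply (continuity_pt_minus f g); auto. Qed.
Lemma cp_opp f x: continuity_pt f x -> continuity_pt (fun y => - f y) x.
Proof. intros; apply (continuity_pt_opp f); auto. Qed.
Lemma cp_const c x: continuity_pt (fun _ => c) x.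
Proof. apply continuity_pt_const; intros ? ?; auto. Qed.
Lemma cp_id x: continuity_pt (fun y => y) x.
Proof. apply continuity_pt_id. Qed.
Lemma cp_exp f x: continuity_pt f x -> continuity_pt (fun y => exp (f y)) x.
Proof. intros; apply (continuity_pt_comp f exp); auto. apply derivable_continuous_pt, derivable_pt_exp. Qed.
Lemma cp_cos f x: continuity_pt f x -> continuity_pt (fun y => cos (f y)) x.
Proof. intros; apply (continuity_pt_comp f cos); auto. apply derivable_continuous_pt, derivable_pt_cos. Qed.
Lemma cp_sin f x: continuity_pt f x -> continuity_pt (fun y => sin (f y)) x.
Proof. intros; apply (continuity_pt_comp f sin); auto. apply derivable_continuous_pt, derivable_pt_sin. Qed.
Lemma cp_rr p f x: 0 < p -> continuity_pt f x -> continuity_pt (fun y => rr p (f y)) x.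
Proof. intros; apply (continuity_pt_comp f (rr p)); auto. apply rr_cont; auto. Qed.

Ltac cont := repeat (first [ apply cp_mult | apply cp_plus | apply cp_minus | apply cp_opp
  | apply cp_exp | apply cp_cos | apply cp_sin | apply cp_rr; [assumption|] | apply cp_id | apply cp_const ]).

Lemma cpt_cont f x : continuity_pt f x -> continuous f x.
Proof. intros; apply continuity_pt_filterlim; auto. Qed.

Lemma exRI g a b : (forall x, continuity_pt g x) -> ex_RInt g a b.
Proof. intros H; apply (ex_RInt_continuous (V:=R_CompleteNormedModule)); intros; apply cpt_cont; auto. Qed.

Lemma derive_RInt0 g V : (forall x, continuity_pt g x) -> is_derive (fun V => RInt g 0 V) V (g V).
Proof. intros H. apply (is_derive_RInt (V:=R_CompleteNormedModule) _ _ 0). apply filter_forall; intros; apply (RInt_correct (V:=R_CompleteNormedModule)), exRI; auto.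
 apply cpt_cont; auto. Qed.

Lemma RInt_diff g v w: (forall x, continuity_pt g x) -> RInt g 0 w - RInt g 0 v = RInt g v w.
Proof. intros H. rewrite <- (RInt_Chasles g 0 v w) by (apply exRI; auto).
 unfold plus; simpl. ring. Qed.

Lemma rr_derive p w : 0 < p -> 0 < w -> is_derive (rr p) w (rr p w / (p * w)).
Proof. intros hp hw. apply is_derive_ext_loc with (f := fun x => Rpower x (/ p)).
 exists (mkposreal w hw). intros y Hy. simpl in Hy. unfold ball in Hy; simpl in Hy.
 unfold AbsRing_ball, abs, minus, plus, opp in Hy; simpl in Hy.
 apply Rabs_def2 in Hy. rewrite rr_pos; auto. lra.
 replace (rr p w / (p * w)) with (/ p * Rpower w (/ p - 1)).
 apply is_derive_Reals, derivable_pt_lim_power; auto.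
 rewrite rr_pos by auto. unfold Rminus. rewrite Rpower_plus. rewrite Rpower_Ropp, Rpower_1 by auto.
 field; lra.
Qed.

Lemma rr_scale p be w : 0 < p -> 0 < be -> 0 < w -> rr p (Rpower be p * w) = be * rr p w.
Proof. intros hp hb hw. rewrite !rr_pos; auto. rewrite <- Rpower_mult_distr; auto.
 rewrite Rpower_mult. replace (p * / p) with 1 by (field; lra). rewrite Rpower_1; auto.
 apply Rpower_pos. apply Rmult_lt_0_compat; auto; apply Rpower_pos. Qed.

Definition PP p be V := RInt (fun w => exp (- (be * rr p w))) 0 V.

Lemma ebr_cont p be x : 0 < p -> continuity_pt (fun w => exp (- (be * rr p w))) x.
Proof. intros; cont. Qed.

Lemma PP_derive p be V : 0 < p -> is_derive (PP p be) V (exp (- (be * rr p V))).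
Proof. intros; unfold PP; apply (derive_RInt0 (fun w => exp (- (be * rr p w)))); intros; apply ebr_cont; auto. Qed.

Lemma PP_0 p be : PP p be 0 = 0.
Proof. unfold PP. apply (RInt_point (V:=R_CompleteNormedModule)). Qed.

Lemma PP_lt p be v w : 0 < p -> v < w -> PP p be v < PP p be w.
Proof. intros hp hvw. unfold PP. apply Rminus_gt_0_lt. rewrite RInt_diff by (intros; apply ebr_cont; auto).
 apply RInt_gt_0; auto. intros; apply exp_pos. intros; apply cpt_cont, ebr_cont; auto. Qed.

Lemma PP_le p be v w : 0 < p -> v <= w -> PP p be v <= PP p be w.
Proof. intros hp [H|H]. left; apply PP_lt; auto. subst; lra. Qed.

Lemma RI_link p be h u v (pr : Riemann_integrable h u v) : 0 < p -> 0 < u -> u <= v ->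
  (forall t, 0 < t -> h t = Rpower t (p - 1) * exp (- (be * t))) ->
  RiemannInt pr = (PP p be (Rpower v p) - PP p be (Rpower u p)) / p.
Proof.
 intros hp hu huv hh. rewrite <- RInt_Reals.
 rewrite (RInt_ext h (fun t => Rpower t (p - 1) * exp (- (be * t)))).
 2:{ intros x Hx. rewrite Rmin_left, Rmax_right in Hx by lra. apply hh; lra. }
 apply is_RInt_unique.
 set (F := fun t => / p * PP p be (Rpower t p)).
 replace ((PP p be (Rpower v p) - PP p be (Rpower u p)) / p) with (minus (F v) (F u)).
 2:{ unfold F, minus, plus, opp; simpl. field; lra. }
 apply (is_RInt_derive (V:=R_CompleteNormedModule)).
 - intros t Ht. rewrite Rmin_left, Rmax_right in Ht by lra.
   replace (Rpower t (p - 1) * exp (- (be * t))) with (/ p * ((p * Rpower t (p - 1)) * exp (- (be * rr p (Rpower t p))))).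
   2:{ rewrite rr_Rpower by lra. field. lra. }
   unfold F. apply is_derive_scal.
   apply (is_derive_comp (PP p be) (fun t => Rpower t p)).
   apply PP_derive; auto. apply is_derive_Reals, derivable_pt_lim_power; lra.
 - intros t Ht. rewrite Rmin_left, Rmax_right in Ht by lra. apply cpt_cont.
   apply cp_mult. 2: cont.
   apply derivable_continuous_pt. exists ((p - 1) * Rpower t (p - 1 - 1)).
   apply derivable_pt_lim_power; lra.
Qed.

Lemma PP_ge0 p be W : 0 < p -> 0 <= W -> 0 <= PP p be W.
Proof. intros. rewrite <- (PP_0 p be). apply PP_le; auto. Qed.

Lemma exp_le x y : x <= y -> exp x <= exp y.
Proof. intros [H|H]. left; apply exp_increasing; auto. subst; lra. Qed.

Lemma PP_le_W p be W : 0 < p -> 0 <= be -> 0 <= W -> PP p be W <= W.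
Proof. intros hp hb hW. unfold PP.
 replace W with (RInt (fun _ => 1) 0 W) at 2.
 2:{ rewrite RInt_const. unfold scal; simpl. unfold mult; simpl. ring. }
 apply RInt_le; auto. apply exRI; intros; apply ebr_cont; auto. apply exRI; intros; apply cp_const.
 intros x Hx. rewrite <- exp_0. apply exp_le.
 assert (0 <= be * rr p x) by (apply Rmult_le_pos; auto; apply rr_ge0). lra.
Qed.

Lemma rr_scale' p be w : 0 < p -> 0 < be -> rr p (Rpower be p * w) = be * rr p w.
Proof. intros hp hb. destruct (Rlt_dec 0 w). apply rr_scale; auto.
 rewrite !rr_nonpos; try lra. assert (0 < Rpower be p) by apply Rpower_pos. nra. Qed.

Lemma PP_scale p be V : 0 < p -> 0 < be ->
  PP p be V = / Rpower be p * PP p 1 (Rpower be p * V).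
Proof. intros hp hb. unfold PP.
 assert (Hc : 0 < Rpower be p) by apply Rpower_pos.
 assert (H := RInt_comp_lin (V:=R_CompleteNormedModule) (fun w => exp (- (1 * rr p w))) (Rpower be p) 0 0 V ltac:(apply exRI; intros; apply ebr_cont; auto)).
 rewrite Rmult_0_r, !Rplus_0_r in H. rewrite <- H.
 transitivity (/ Rpower be p * RInt (fun y => Rpower be p * exp (- (be * rr p y))) 0 V).
 2:{ f_equal. apply RInt_ext.  intros x _. cbv beta. rewrite Rplus_0_r. unfold scal; simpl; unfold mult; simpl. rewrite rr_scale'; auto.
     f_equal. f_equal. ring. }
 assert (E : RInt (fun y => Rpower be p * exp (- (be * rr p y))) 0 V = Rpower be p * RInt (fun y => exp (- (be * rr p y))) 0 V).
 { apply (RInt_scal (V:=R_CompleteNormedModule) (fun y => exp (- (be * rr p y)))).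
   apply exRI; intros; apply ebr_cont; auto. }
 rewrite E. rewrite <- Rmult_assoc, Rinv_l by lra. rewrite Rmult_1_l. reflexivity.
Qed.

Lemma Gamma_bound p G V : 0 < p -> IsGamma p G -> PP p 1 V < p * G.
Proof.
 intros hp [_ hG].
 set (V' := Rmax V 0 + 1).
 assert (HV' : 0 < V') by (unfold V'; generalize (Rmax_r V 0); lra).
 assert (HVV : V < V') by (unfold V'; generalize (Rmax_l V 0); lra).
 set (d0 := PP p 1 V' - PP p 1 V).
 assert (Hd0 : 0 < d0) by (unfold d0; generalize (PP_lt p 1 V V' hp HVV); lra).
 destruct (hG (d0 / (4 * p))) as [d [M [Hd HM]]]. apply Rdiv_lt_0_compat; lra.
 set (v := Rmax (M + 1) (rr p V')).
 assert (Hv1 : M < v) by (unfold v; generalize (Rmax_l (M+1) (rr p V')); lra).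
 assert (Hv2 : rr p V' <= v) by (unfold v; apply Rmax_r).
 assert (Hrr : 0 < rr p V') by (apply rr_gt0; auto).
 assert (Hd4 : 0 < d0 / 4) by lra.
 set (u := Rmin (d / 2) (Rmin v (rr p (d0 / 4)))).
 assert (Hr4 : 0 < rr p (d0 / 4)) by (apply rr_gt0; auto).
 assert (Hu0 : 0 < u). { unfold u. apply Rmin_pos. lra. apply Rmin_pos; lra. }
 assert (Hud : u < d). { unfold u. generalize (Rmin_l (d/2) (Rmin v (rr p (d0 / 4)))). lra. }
 assert (Huv : u <= v). { unfold u. eapply Rle_trans. apply Rmin_r. apply Rmin_l. }
 assert (Hu4 : u <= rr p (d0 / 4)). { unfold u. eapply Rle_trans. apply Rmin_r. apply Rmin_r. }
 assert (pr : Riemann_integrable (fun s => Rpower s (p - 1) * exp (- s)) u v).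
 { apply ex_RInt_Reals_0. apply (ex_RInt_continuous (V:=R_CompleteNormedModule)).
   intros z Hz. rewrite Rmin_left, Rmax_right in Hz by lra. apply cpt_cont.
   apply cp_mult. apply derivable_continuous_pt. exists ((p - 1) * Rpower z (p - 1 - 1)).
   apply derivable_pt_lim_power; lra. cont. }
 specialize (HM u v pr Hu0 ltac:(lra) Hv1 Huv).
 rewrite (RI_link p 1 _ u v pr hp Hu0 Huv) in HM.
 2:{ intros; f_equal; f_equal; ring. }
 assert (E1 : PP p 1 (Rpower u p) <= d0 / 4).
 { eapply Rle_trans. apply PP_le_W; try lra. left; apply Rpower_pos.
   rewrite <- (Rpower_rr p (d0/4)) by lra. apply Rle_Rpower_l; lra. }
 assert (E2 : PP p 1 V' <= PP p 1 (Rpower v p)).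
 { apply PP_le; auto. rewrite <- (Rpower_rr p V') by lra. apply Rle_Rpower_l; lra. }
 apply Rabs_def2 in HM. destruct HM as [HM1 HM2].
 assert (E3 : PP p 1 (Rpower v p) - PP p 1 (Rpower u p) < p * G + d0 / 4).
 { replace (d0 / 4) with (p * (d0 / (4 * p))) by (field; lra).
   apply Rmult_lt_compat_l with (r := p) in HM1; auto.
   replace (p * ((PP p 1 (Rpower v p) - PP p 1 (Rpower u p)) / p - G)) with
     (PP p 1 (Rpower v p) - PP p 1 (Rpower u p) - p * G) in HM1 by (field; lra). lra. }
 unfold d0 in *. lra.
Qed.

Lemma G_pos p G : 0 < p -> IsGamma p G -> 0 < G.
Proof. intros hp hG. generalize (Gamma_bound p G 0 hp hG). rewrite PP_0. intros H.
 apply (Rmult_lt_reg_l p); lra. Qed.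

Lemma PP_bound p G be V : 0 < p -> 0 < be -> IsGamma p G -> PP p be V < p * G / Rpower be p.
Proof. intros hp hb hG. rewrite PP_scale; auto. generalize (Gamma_bound p G (Rpower be p * V) hp hG).
 assert (0 < Rpower be p) by apply Rpower_pos. intros H1.
 unfold Rdiv. rewrite (Rmult_comm (/ Rpower be p)). apply Rmult_lt_compat_r; auto. apply Rinv_0_lt_compat; auto. Qed.

Lemma eq_eps a b : (forall eps, 0 < eps -> Rabs (a - b) < eps) -> a = b.
Proof. intros H. destruct (Req_dec a b) as [E|E]; auto.
 assert (0 < Rabs (a - b)) by (apply Rabs_pos_lt; lra). specialize (H _ H0). lra. Qed.

Lemma PPpow_cont p be t : 0 < p -> 0 < t -> continuity_pt (fun w => PP p be (Rpower w p)) t.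
Proof. intros hp ht. apply derivable_continuous_pt. exists (p * Rpower t (p - 1) * exp (- (be * rr p (Rpower t p)))).
 apply is_derive_Reals. apply (is_derive_comp (PP p be) (fun t => Rpower t p)).
 apply PP_derive; auto. apply is_derive_Reals, derivable_pt_lim_power; lra. Qed.

Lemma Drel_pos p b G t y : 0 < p -> 0 < b -> 0 < t -> D_rel p b G t y ->
  y = Rpower (2 * b + 1) p / (Rpower 2 p * G) * (PP p (b + / 2) (Rpower t p) / p).
Proof.
 intros hp hb ht [[E _]|[_ [L [[_ [Hint Hlim]] Hy]]]]. rewrite E in ht; lra.
 rewrite Hy. f_equal. apply eq_eps. intros eps Heps.
 destruct (Hlim (eps / 3)) as [d [Hd Hd2]]. lra.
 destruct (PPpow_cont p (b + / 2) t hp ht (p * eps / 3)) as [d1 [Hd1 Hc]].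
 nra.
 set (m := Rmin d (Rmin d1 t)).
 assert (Hm : 0 < m) by (unfold m; repeat apply Rmin_pos; lra).
 assert (Hmd : m <= d) by (unfold m; apply Rmin_l).
 assert (Hmd1 : m <= d1) by (unfold m; eapply Rle_trans; [apply Rmin_r|apply Rmin_l]).
 assert (Hmt : m <= t) by (unfold m; eapply Rle_trans; [apply Rmin_r|apply Rmin_r]).
 set (v := t - m / 2).
 assert (Hpe : 0 < p * eps / 3) by nra.
 assert (Hr : 0 < rr p (p * eps / 3)) by (apply rr_gt0; auto).
 set (u := Rmin (m / 2) (Rmin (v / 2) (rr p (p * eps / 3)))).
 assert (Hu : 0 < u) by (unfold u; repeat apply Rmin_pos; unfold v; lra).
 assert (Hum : u <= m / 2) by (unfold u; apply Rmin_l).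
 assert (Huv : u <= v / 2) by (unfold u; eapply Rle_trans; [apply Rmin_r|apply Rmin_l]).
 assert (Hur : u <= rr p (p * eps / 3)) by (unfold u; eapply Rle_trans; [apply Rmin_r|apply Rmin_r]).
 assert (Hv : 0 < v) by (unfold v; lra).
 destruct (Hint u v) as [pr]; try lra. unfold v; lra.
 specialize (Hd2 u v pr ltac:(lra) ltac:(lra) ltac:(unfold v; lra) ltac:(unfold v; lra) ltac:(lra)).
 rewrite (RI_link p (b + / 2) _ u v pr hp Hu ltac:(lra)) in Hd2.
 2:{ intros; f_equal; f_equal; ring. }
 assert (E1 : 0 <= PP p (b + / 2) (Rpower u p) <= p * eps / 3).
 { split. apply PP_ge0; auto. left; apply Rpower_pos.
   eapply Rle_trans. apply PP_le_W; try lra. left; apply Rpower_pos.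
   rewrite <- (Rpower_rr p (p * eps / 3)) by lra. apply Rle_Rpower_l; lra. }
 specialize (Hc v). assert (Hc' : Rabs (PP p (b + / 2) (Rpower v p) - PP p (b + / 2) (Rpower t p)) < p * eps / 3).
 { apply Hc. split. unfold D_x, no_cond; split; auto. unfold v; lra.
   simpl. unfold Rdist. unfold v. rewrite Rabs_left by lra. lra. }
 apply Rabs_def2 in Hd2. apply Rabs_def2 in Hc'. destruct Hd2 as [H1 H2].
 set (A := PP p (b + / 2) (Rpower v p) - PP p (b + / 2) (Rpower u p)) in *.
 assert (F1 : A - p * L < p * (eps / 3)).
 { replace (A - p * L) with (p * (A / p - L)) by (field; lra). apply Rmult_lt_compat_l; auto. }
 assert (F2 : p * (- (eps / 3)) < A - p * L).
 { replace (A - p * L) with (p * (A / p - L)) by (field; lra). apply Rmult_lt_compat_l; auto. }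
 unfold A in *. apply Rabs_def1.
 - apply (Rmult_lt_reg_l p); auto.
   replace (p * (L - PP p (b + / 2) (Rpower t p) / p)) with (p * L - PP p (b + / 2) (Rpower t p)) by (field; lra).
   lra.
 - apply (Rmult_lt_reg_l p); auto.
   replace (p * (L - PP p (b + / 2) (Rpower t p) / p)) with (p * L - PP p (b + / 2) (Rpower t p)) by (field; lra).
   lra.
Qed.

Lemma Drel_0 p b G y : D_rel p b G 0 y -> y = 0.
Proof. intros [[_ E]|[H _]]; auto; lra. Qed.

Definition lim_inf (F : R -> R) (L : R) := forall eps, 0 < eps ->
  exists W0, forall W, W0 <= W -> Rabs (F W - L) < eps.

Lemma mono_lim (F : R -> R) B : (forall v w, 0 <= v <= w -> F v <= F w) ->
  (forall w, 0 <= w -> F w <= B) -> exists L, lim_inf F L.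
Proof.
 intros Hm Hb.
 destruct (completeness (fun y => exists w, 0 <= w /\ y = F w)) as [m [Hub Hlub]].
 { exists B. intros y [w [Hw ->]]. apply Hb; auto. }
 { exists (F 0), 0. split; auto; lra. }
 exists m. intros eps Heps.
 destruct (classic (exists w0, 0 <= w0 /\ m - eps < F w0)) as [[w0 [Hw0 Hf]]|Hn].
 - exists w0. intros W HW. assert (F w0 <= F W) by (apply Hm; lra).
   assert (F W <= m) by (apply Hub; exists W; split; auto; lra).
   apply Rabs_def1; lra.
 - exfalso. assert (m <= m - eps); [|lra]. apply Hlub. intros y [w [Hw ->]].
   destruct (Rle_dec (F w) (m - eps)); auto. exfalso; apply Hn; exists w; split; auto; lra.
Qed.

Lemma locally_interval (P : R -> Prop) z a b : a < z < b -> (forall y, a < y < b -> P y) -> locally z P.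
Proof. intros Hz H. assert (Hr : 0 < Rmin (z - a) (b - z)) by (apply Rmin_pos; lra).
 exists (mkposreal _ Hr). intros y Hy. unfold ball in Hy; simpl in Hy.
 unfold AbsRing_ball, abs, minus, plus, opp in Hy; simpl in Hy.
 apply Rabs_def2 in Hy. generalize (Rmin_l (z - a) (b - z)) (Rmin_r (z - a) (b - z)). intros. apply H. lra. Qed.

Definition EE p be K w := K / p * PP p be w.

Lemma EE_lt p be K v w : 0 < p -> 0 < K -> v < w -> EE p be K v < EE p be K w.
Proof. intros. unfold EE. apply Rmult_lt_compat_l. apply Rdiv_lt_0_compat; auto. apply PP_lt; auto. Qed.

Lemma EE_le_inv p be K v w : 0 < p -> 0 < K -> EE p be K v <= EE p be K w -> v <= w.
Proof. intros hp hK H. destruct (Rle_dec v w); auto. assert (w < v) by lra.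
 generalize (EE_lt p be K w v hp hK H0). lra. Qed.

Lemma EE_lt_inv p be K v w : 0 < p -> 0 < K -> EE p be K v < EE p be K w -> v < w.
Proof. intros hp hK H. destruct (Rlt_dec v w); auto. assert (w <= v) by lra.
 destruct H0. generalize (EE_lt p be K w v hp hK H0). lra. subst; lra. Qed.

Lemma EE_0 p be K : EE p be K 0 = 0.
Proof. unfold EE. rewrite PP_0. ring. Qed.

Lemma EE_derive p be K w : 0 < p -> is_derive (EE p be K) w (K / p * exp (- (be * rr p w))).
Proof. intros. unfold EE. apply is_derive_scal. apply PP_derive; auto. Qed.

Lemma GEN p be K (tau g psi : R -> R) L : 0 < p -> 0 < K ->
 (forall w, EE p be K w < 1) ->
 (forall s, 0 <= s < 1 -> EE p be K (tau s) = s) ->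
 (forall s, 0 < s < 1 -> g s = psi (tau s)) ->
 (forall w, continuity_pt psi w) ->
 lim_inf (fun W => RInt (fun w => K / p * exp (- (be * rr p w)) * psi w) 0 W) L ->
 improper_int g 0 1 L.
Proof.
 intros hp hK HE1 Htau Hg Hpsi Hlim.
 set (Psi := fun w => K / p * exp (- (be * rr p w)) * psi w).
 assert (HPsi : forall w, continuity_pt Psi w) by (intros; unfold Psi; apply cp_mult; auto; cont).
 set (F := fun W => RInt Psi 0 W).
 assert (Hinv : forall w, 0 <= EE p be K w < 1 -> tau (EE p be K w) = w).
 { intros w Hw. generalize (Htau _ Hw). intros H.
   apply Rle_antisym; apply (EE_le_inv p be K); auto; lra. }
 assert (Hmono : forall u v, 0 <= u -> u <= v -> v < 1 -> tau u <= tau v).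
 { intros u v Hu Huv Hv. apply (EE_le_inv p be K); auto. rewrite !Htau; lra. }
 assert (Hcont : forall s0, 0 < s0 < 1 -> continuity_pt tau s0).
 { intros s0 Hs0 eps Heps. set (t0 := tau s0).
   assert (E0 : EE p be K t0 = s0) by (apply Htau; lra).
   assert (El : EE p be K (t0 - eps) < s0) by (rewrite <- E0; apply EE_lt; auto; lra).
   assert (Er : s0 < EE p be K (t0 + eps)) by (rewrite <- E0; apply EE_lt; auto; lra).
   set (d := Rmin (Rmin s0 (1 - s0)) (Rmin (s0 - EE p be K (t0 - eps)) (EE p be K (t0 + eps) - s0))).
   assert (Hd : 0 < d) by (unfold d; repeat apply Rmin_pos; lra).
   exists d. split; auto. intros s [_ Hs]. simpl in Hs. unfold Rdist in Hs. simpl. unfold Rdist.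
   apply Rabs_def2 in Hs.
   generalize (Rmin_l (Rmin s0 (1 - s0)) (Rmin (s0 - EE p be K (t0 - eps)) (EE p be K (t0 + eps) - s0)))
     (Rmin_r (Rmin s0 (1 - s0)) (Rmin (s0 - EE p be K (t0 - eps)) (EE p be K (t0 + eps) - s0)))
     (Rmin_l s0 (1 - s0)) (Rmin_r s0 (1 - s0))
     (Rmin_l (s0 - EE p be K (t0 - eps)) (EE p be K (t0 + eps) - s0))
     (Rmin_r (s0 - EE p be K (t0 - eps)) (EE p be K (t0 + eps) - s0)). fold d. intros.
   assert (Es : EE p be K (tau s) = s) by (apply Htau; lra).
   assert (t0 - eps < tau s) by (apply (EE_lt_inv p be K); auto; lra).
   assert (tau s < t0 + eps) by (apply (EE_lt_inv p be K); auto; lra).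
   apply Rabs_def1; lra. }
 assert (Hgc : forall z, 0 < z < 1 -> continuous g z).
 { intros z Hz. apply (continuous_ext_loc _ (fun y => psi (tau y))).
   apply (locally_interval _ z 0 1); auto. intros y Hy; symmetry; apply Hg; auto.
   apply cpt_cont. apply (continuity_pt_comp tau psi); auto. }
 assert (Hint : forall u v, 0 < u -> u <= v -> v < 1 -> ex_RInt g u v /\ RInt g u v = F (tau v) - F (tau u)).
 { intros u v Hu Huv Hv.
   assert (Hex : ex_RInt g u v).
   { apply (ex_RInt_continuous (V:=R_CompleteNormedModule)). intros z Hz.
     rewrite Rmin_left, Rmax_right in Hz by lra. apply Hgc; lra. }
   split; auto.
   rewrite (RInt_ext g (fun y => psi (tau y))).
   2:{ intros x Hx. rewrite Rmin_left, Rmax_right in Hx by lra. apply Hg; lra. }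
   assert (Htuv : tau u <= tau v) by (apply Hmono; lra).
   assert (Hrng : forall y, tau u <= y <= tau v -> u <= EE p be K y <= v).
   { intros y [Hy1 Hy2]. rewrite <- (Htau u) at 1 by lra. rewrite <- (Htau v) by lra. split.
     destruct Hy1 as [H|H]. left; apply EE_lt; auto. rewrite H; lra.
     destruct Hy2 as [H|H]. left; apply EE_lt; auto. rewrite H; lra. }
   transitivity (RInt (fun y => psi (tau y)) (EE p be K (tau u)) (EE p be K (tau v))).
   { rewrite !Htau by lra. reflexivity. }
   rewrite <- (RInt_comp (V:=R_CompleteNormedModule) (fun y => psi (tau y)) (EE p be K) (fun w => K / p * exp (- (be * rr p w)))).
   - unfold F. rewrite RInt_diff by auto.
     apply RInt_ext. intros x Hx. rewrite Rmin_left, Rmax_right in Hx by lra.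
     unfold Psi, scal; simpl; unfold mult; simpl. rewrite Hinv. auto.
     generalize (Hrng x ltac:(lra)). lra.
   - intros x Hx. rewrite Rmin_left, Rmax_right in Hx by lra. apply cpt_cont.
     apply (continuity_pt_comp tau psi); auto. apply Hcont. generalize (Hrng x Hx); lra.
   - intros x Hx. split. apply EE_derive; auto. apply cpt_cont. cont. }
 split; [lra|]. split.
 { intros u v Hu Huv Hv. destruct (Hint u v Hu Huv Hv) as [Hex _]. constructor. apply ex_RInt_Reals_0; auto. }
 intros eps Heps.
 assert (HF0 : continuity_pt F 0).
 { apply derivable_continuous_pt. exists (Psi 0). apply is_derive_Reals. unfold F.
   apply (derive_RInt0 Psi 0). auto. }
 destruct (HF0 (eps / 2)) as [dl [Hdl Hdl2]]. lra.
 destruct (Hlim (eps / 2)) as [W0 HW0]. lra.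
 set (W1 := Rmax W0 0).
 assert (HE0 : 0 < EE p be K (dl / 2)) by (rewrite <- (EE_0 p be K); apply EE_lt; auto; lra).
 assert (HE1' : 0 < 1 - EE p be K W1) by (generalize (HE1 W1); lra).
 exists (Rmin (EE p be K (dl / 2)) (1 - EE p be K W1)). split. apply Rmin_pos; lra.
 intros u v pr Hu Hud Hvd Hv Huv.
 generalize (Rmin_l (EE p be K (dl / 2)) (1 - EE p be K W1)) (Rmin_r (EE p be K (dl / 2)) (1 - EE p be K W1)). intros Hm1 Hm2.
 destruct (Hint u v Hu Huv Hv) as [_ HR]. rewrite <- RInt_Reals, HR.
 assert (Htu : 0 < tau u < dl / 2).
 { split; apply (EE_lt_inv p be K); auto; rewrite Htau by lra. rewrite EE_0; lra. lra. }
 assert (Htv : W1 < tau v) by (apply (EE_lt_inv p be K); auto; rewrite Htau by lra; lra).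
 assert (A1 : Rabs (F (tau u)) < eps / 2).
 { specialize (Hdl2 (tau u)). unfold F at 2 in Hdl2. rewrite (RInt_point (V:=R_CompleteNormedModule)) in Hdl2.
   simpl in Hdl2. unfold Rdist in Hdl2. rewrite !Rminus_0_r in Hdl2. apply Hdl2. split.
   unfold D_x, no_cond. split; auto; lra. rewrite Rabs_pos_eq; lra. }
 assert (A2 : Rabs (F (tau v) - L) < eps / 2).
 { apply HW0. generalize (Rmax_l W0 0). fold W1. lra. }
 apply Rabs_def2 in A1. apply Rabs_def2 in A2. apply Rabs_def1; lra.
Qed.

Lemma lim_const c : lim_inf (fun _ => c) c.
Proof. intros eps H. exists 0. intros. rewrite Rminus_diag, Rabs_R0. auto. Qed.

Lemma lim_ext F G L W1 : (forall W, W1 <= W -> F W = G W) -> lim_inf F L -> lim_inf G L.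
Proof. intros He H eps Heps. destruct (H eps Heps) as [W0 HW0]. exists (Rmax W0 W1).
 intros W HW. rewrite <- He. apply HW0. generalize (Rmax_l W0 W1); lra. generalize (Rmax_r W0 W1); lra. Qed.

Lemma lim_plus F G L M : lim_inf F L -> lim_inf G M -> lim_inf (fun W => F W + G W) (L + M).
Proof. intros HF HG eps Heps. destruct (HF (eps/2)) as [W1 H1]. lra. destruct (HG (eps/2)) as [W2 H2]. lra.
 exists (Rmax W1 W2). intros W HW. generalize (Rmax_l W1 W2) (Rmax_r W1 W2); intros.
 specialize (H1 W ltac:(lra)). specialize (H2 W ltac:(lra)).
 apply Rabs_def2 in H1. apply Rabs_def2 in H2. apply Rabs_def1; lra. Qed.

Lemma lim_scal c F L : lim_inf F L -> lim_inf (fun W => c * F W) (c * L).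
Proof. intros HF eps Heps. destruct (HF (eps / (Rabs c + 1))) as [W1 H1].
 apply Rdiv_lt_0_compat; auto. generalize (Rabs_pos c); lra.
 exists W1. intros W HW. specialize (H1 W HW).
 replace (c * F W - c * L) with (c * (F W - L)) by ring. rewrite Rabs_mult.
 assert (0 <= Rabs c) by apply Rabs_pos.
 apply Rle_lt_trans with (Rabs c * (eps / (Rabs c + 1))). apply Rmult_le_compat_l; auto. lra.
 apply Rlt_le_trans with ((Rabs c + 1) * (eps / (Rabs c + 1))). apply Rmult_lt_compat_r. apply Rdiv_lt_0_compat; lra. lra.
 right; field; lra. Qed.

Lemma lim_minus F G L M : lim_inf F L -> lim_inf G M -> lim_inf (fun W => F W - G W) (L - M).
Proof. intros HF HG. assert (H := lim_plus _ _ _ _ HF (lim_scal (-1) _ _ HG)).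
 intros eps Heps. destruct (H eps Heps) as [W0 HW]. exists W0. intros W HW0. specialize (HW W HW0).
 replace (F W - G W - (L - M)) with (F W + -1 * G W - (L + -1 * M)) by ring. auto. Qed.

Lemma lim_unique F L M : lim_inf F L -> lim_inf F M -> L = M.
Proof. intros HL HM. apply eq_eps. intros eps Heps.
 destruct (HL (eps/2)) as [W1 H1]. lra. destruct (HM (eps/2)) as [W2 H2]. lra.
 specialize (H1 (Rmax W1 W2) (Rmax_l _ _)). specialize (H2 (Rmax W1 W2) (Rmax_r _ _)).
 apply Rabs_def2 in H1. apply Rabs_def2 in H2. apply Rabs_def1; lra. Qed.

Lemma lim_bounded F L : lim_inf F L -> exists W0, forall W, W0 <= W -> Rabs (F W) <= Rabs L + 1.
Proof. intros H. destruct (H 1 Rlt_0_1) as [W0 HW]. exists W0. intros W HW1. specialize (HW W HW1).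
 generalize (Rabs_triang_inv (F W) L). lra. Qed.

Lemma lim_mult F G L M : lim_inf F L -> lim_inf G M -> lim_inf (fun W => F W * G W) (L * M).
Proof. intros HF HG eps Heps.
 destruct (lim_bounded G M HG) as [W3 H3].
 set (c := Rabs M + 1). assert (Hc : 0 < c) by (unfold c; generalize (Rabs_pos M); lra).
 set (d := Rabs L + 1). assert (Hd : 0 < d) by (unfold d; generalize (Rabs_pos L); lra).
 destruct (HF (eps / (2 * c))) as [W1 H1]. apply Rdiv_lt_0_compat; lra.
 destruct (HG (eps / (2 * d))) as [W2 H2]. apply Rdiv_lt_0_compat; lra.
 exists (Rmax W1 (Rmax W2 W3)). intros W HW.
 generalize (Rmax_l W1 (Rmax W2 W3)) (Rmax_r W1 (Rmax W2 W3)) (Rmax_l W2 W3) (Rmax_r W2 W3); intros.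
 specialize (H1 W ltac:(lra)). specialize (H2 W ltac:(lra)). specialize (H3 W ltac:(lra)).
 replace (F W * G W - L * M) with ((F W - L) * G W + L * (G W - M)) by ring.
 eapply Rle_lt_trans. apply Rabs_triang. rewrite !Rabs_mult.
 assert (A1 : Rabs (F W - L) * Rabs (G W) <= eps / (2 * c) * c).
 { apply Rmult_le_compat. apply Rabs_pos. apply Rabs_pos. left; apply H1. apply H3. }
 assert (A2 : Rabs L * Rabs (G W - M) <= d * (eps / (2 * d))).
 { apply Rmult_le_compat. apply Rabs_pos. apply Rabs_pos. unfold d; lra. left; apply H2. }
 replace (eps / (2 * c) * c) with (eps / 2) in A1 by (field; lra).
 replace (d * (eps / (2 * d))) with (eps / 2) in A2 by (field; lra).
 assert (Hor : Rabs L * Rabs (G W - M) < d * (eps / (2 * d)) \/ Rabs (F W - L) * Rabs (G W) < eps / (2 * c) * c).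
 { destruct (Req_dec (Rabs L * Rabs (G W - M)) (d * (eps / (2 * d)))) as [E|E].
   - right. apply Rle_lt_trans with (Rabs (F W - L) * c). apply Rmult_le_compat_l. apply Rabs_pos. unfold c; lra.
     apply Rmult_lt_compat_r; auto.
   - left. apply Rle_lt_trans with (Rabs L * (eps / (2 * d))). apply Rmult_le_compat_l. apply Rabs_pos. lra.
     apply Rmult_lt_compat_r. apply Rdiv_lt_0_compat; lra. unfold d; lra. }
 replace (eps / (2 * c) * c) with (eps / 2) in Hor by (field; lra).
 replace (d * (eps / (2 * d))) with (eps / 2) in Hor by (field; lra). destruct Hor; lra.
Qed.

Lemma lim_squeeze0 F G W1 : (forall W, W1 <= W -> Rabs (F W) <= G W) -> lim_inf G 0 -> lim_inf F 0.
Proof. intros Hb HG eps Heps. destruct (HG eps Heps) as [W0 H0]. exists (Rmax W0 W1). intros W HW.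
 generalize (Rmax_l W0 W1) (Rmax_r W0 W1); intros. specialize (H0 W ltac:(lra)). specialize (Hb W ltac:(lra)).
 rewrite Rminus_0_r in *. apply Rabs_def2 in H0. eapply Rle_lt_trans; eauto. lra. Qed.

Lemma lim_ge F L w : (forall v w, 0 <= v <= w -> F v <= F w) -> lim_inf F L -> 0 <= w -> F w <= L.
Proof. intros Hm HL Hw. destruct (Rle_dec (F w) L) as [|Hn]; auto. exfalso.
 destruct (HL ((F w - L) / 2)) as [W0 H0]. lra. specialize (H0 (Rmax W0 w) (Rmax_l _ _)).
 assert (F w <= F (Rmax W0 w)) by (apply Hm; split; auto; apply Rmax_r).
 apply Rabs_def2 in H0. lra. Qed.

Lemma RInt_comb (f g h : R -> R) (c1 c2 W : R) :
  (forall x, continuity_pt f x) -> (forall x, continuity_pt g x) -> (forall x, continuity_pt h x) ->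
  RInt (fun w => f w - (c1 * g w + c2 * h w)) 0 W = RInt f 0 W - (c1 * RInt g 0 W + c2 * RInt h 0 W).
Proof. intros Hf Hg Hh. apply is_RInt_unique.
 apply (is_RInt_ext (V:=R_NormedModule) (fun w => minus (f w) (plus (scal c1 (g w)) (scal c2 (h w))))).
 { intros; unfold minus, plus, scal, opp; simpl; unfold mult; simpl. ring. }
 apply (is_RInt_minus (V:=R_NormedModule)). apply (RInt_correct (V:=R_CompleteNormedModule)), exRI; auto.
 apply (is_RInt_plus (V:=R_NormedModule)); apply (is_RInt_scal (V:=R_NormedModule));
 apply (RInt_correct (V:=R_CompleteNormedModule)), exRI; auto.
Qed.

Lemma deriv_at0 (k : R -> R) : continuity_pt k 0 -> is_derive (fun w => w * k w) 0 (k 0).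
Proof. intros Hk. apply is_derive_Reals. intros eps Heps.
 destruct (Hk eps Heps) as [d [Hd Hd2]]. exists (mkposreal d Hd). intros h Hh Hhd. simpl in Hhd.
 replace (((0 + h) * k (0 + h) - 0 * k 0) / h - k 0) with (k h - k 0) by (rewrite Rplus_0_l; field; auto).
 apply Hd2. split. unfold D_x, no_cond; split; auto. simpl; unfold Rdist. rewrite Rminus_0_r; auto. Qed.

Lemma rr_loc0 p w : w < 0 -> locally w (fun y => rr p y = 0).
Proof. intros Hw. apply (locally_interval _ w (w - 1) 0). lra. intros y Hy; apply rr_nonpos; lra. Qed.


Definition CW p b x W := RInt (fun w => exp (- (b * rr p w)) * cos (x * rr p w)) 0 W.
Definition SW p b x W := RInt (fun w => exp (- (b * rr p w)) * sin (x * rr p w)) 0 W.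
Definition AW p b x W := RInt (fun w => rr p w * exp (- (b * rr p w)) * cos (x * rr p w)) 0 W.
Definition BW p b x W := RInt (fun w => rr p w * exp (- (b * rr p w)) * sin (x * rr p w)) 0 W.

Lemma IBP_c p b x (hp : 0 < p) W : W * (exp (- (b * rr p W)) * cos (x * rr p W)) = CW p b x W - (b / p * AW p b x W + x / p * BW p b x W).
Proof.
 set (G := fun r => exp (- (b * r)) * cos (x * r)).
 set (dG := fun r => - b * exp (- (b * r)) * cos (x * r) - x * exp (- (b * r)) * sin (x * r)).
 assert (HG : forall r, is_derive G r (dG r)). { intros r; unfold G, dG. auto_derive. auto. ring. }
 set (H := fun w => w * G (rr p w)).
 set (H' := fun w => exp (- (b * rr p w)) * cos (x * rr p w) - (b / p * (rr p w * exp (- (b * rr p w)) * cos (x * rr p w)) + x / p * (rr p w * exp (- (b * rr p w)) * sin (x * rr p w)))).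
 assert (HD : forall w, is_derive H w (H' w)).
 { intros w. destruct (Rtotal_order w 0) as [Hw|[Hw|Hw]].
   - replace (H' w) with 1.
     2:{ unfold H'. rewrite rr_nonpos by lra. replace (b * 0) with 0 by ring. replace (x * 0) with 0 by ring.
         rewrite Ropp_0, exp_0, cos_0, sin_0. field. lra. }
     apply (is_derive_ext_loc (fun w => w)).
     { generalize (rr_loc0 p w Hw). apply filter_imp. intros y Hy. unfold H, G. rewrite Hy.
       replace (b * 0) with 0 by ring. replace (x * 0) with 0 by ring. rewrite Ropp_0, exp_0, cos_0, !Rmult_1_r. reflexivity. }
     apply (is_derive_id (K:=R_AbsRing)).
   - subst. unfold H', H. replace (exp (- (b * rr p 0)) * cos (x * rr p 0) - _) with (G (rr p 0)).
     apply (deriv_at0 (fun w => G (rr p w))). unfold G; cont.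
     rewrite rr_nonpos by lra. unfold G. ring.
   - unfold H. apply is_derive_ext with (f := fun w => w * G (rr p w)). auto.
     replace (H' w) with (1 * G (rr p w) + w * scal (rr p w / (p * w)) (dG (rr p w))).
     apply (Derive.is_derive_mult (fun w => w) (fun w => G (rr p w))). apply (is_derive_id (K:=R_AbsRing)).
     apply (is_derive_comp G (rr p)). apply HG. apply rr_derive; auto.
     unfold H', G, dG, scal; simpl; unfold mult; simpl. field. split; lra. }
 assert (HI : is_RInt H' 0 W (minus (H W) (H 0))).
 { apply (is_RInt_derive (V:=R_CompleteNormedModule)). intros; apply HD. intros; apply cpt_cont. unfold H'. cont. }
 apply (is_RInt_unique (V:=R_CompleteNormedModule)) in HI.
 unfold CW, AW, BW. rewrite <- RInt_comb; try (intros; cont).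
 fold H'. rewrite HI. unfold minus, plus, opp; simpl. unfold H, G. ring.
Qed.

Lemma IBP_s p b x (hp : 0 < p) W : W * (exp (- (b * rr p W)) * sin (x * rr p W)) = SW p b x W - (b / p * BW p b x W + (- x / p) * AW p b x W).
Proof.
 set (G := fun r => exp (- (b * r)) * sin (x * r)).
 set (dG := fun r => - b * exp (- (b * r)) * sin (x * r) + x * exp (- (b * r)) * cos (x * r)).
 assert (HG : forall r, is_derive G r (dG r)). { intros r; unfold G, dG. auto_derive. auto. ring. }
 set (H := fun w => w * G (rr p w)).
 set (H' := fun w => exp (- (b * rr p w)) * sin (x * rr p w) - (b / p * (rr p w * exp (- (b * rr p w)) * sin (x * rr p w)) + (- x / p) * (rr p w * exp (- (b * rr p w)) * cos (x * rr p w)))).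
 assert (HD : forall w, is_derive H w (H' w)).
 { intros w. destruct (Rtotal_order w 0) as [Hw|[Hw|Hw]].
   - replace (H' w) with 0.
     2:{ unfold H'. rewrite rr_nonpos by lra. replace (b * 0) with 0 by ring. replace (x * 0) with 0 by ring.
         rewrite Ropp_0, exp_0, cos_0, sin_0. field. lra. }
     apply (is_derive_ext_loc (fun _ => 0)).
     { generalize (rr_loc0 p w Hw). apply filter_imp. intros y Hy. unfold H, G. rewrite Hy.
       replace (x * 0) with 0 by ring. rewrite sin_0, !Rmult_0_r. reflexivity. }
     apply is_derive_Reals, derivable_pt_lim_const.
   - subst. unfold H', H. replace (exp (- (b * rr p 0)) * sin (x * rr p 0) - _) with (G (rr p 0)).
     apply (deriv_at0 (fun w => G (rr p w))). unfold G; cont.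
     rewrite rr_nonpos by lra. unfold G. ring.
   - unfold H. apply is_derive_ext with (f := fun w => w * G (rr p w)). auto.
     replace (H' w) with (1 * G (rr p w) + w * scal (rr p w / (p * w)) (dG (rr p w))).
     apply (Derive.is_derive_mult (fun w => w) (fun w => G (rr p w))). apply (is_derive_id (K:=R_AbsRing)).
     apply (is_derive_comp G (rr p)). apply HG. apply rr_derive; auto.
     unfold H', G, dG, scal; simpl; unfold mult; simpl. field. split; lra. }
 assert (HI : is_RInt H' 0 W (minus (H W) (H 0))).
 { apply (is_RInt_derive (V:=R_CompleteNormedModule)). intros; apply HD. intros; apply cpt_cont. unfold H'. cont. }
 apply (is_RInt_unique (V:=R_CompleteNormedModule)) in HI.
 unfold SW, AW, BW. rewrite <- RInt_comb; try (intros; cont).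
 fold H'. rewrite HI. unfold minus, plus, opp; simpl. unfold H, G. ring.
Qed.


Lemma c2d_v (g : R -> R) u v : continuity_pt g v -> continuity_2d_pt (fun _ v => g v) u v.
Proof. intros H. apply (continuity_1d_2d_pt_comp g (fun _ v => v)); auto. apply continuity_2d_pt_id2. Qed.

Lemma dCW p b W x : 0 < p -> is_derive (fun x => CW p b x W) x (- BW p b x W).
Proof. intros hp.
 set (f := fun u t => exp (- (b * rr p t)) * cos (u * rr p t)).
 assert (HD : forall u v, Derive (fun z => f z v) u = - (rr p v * exp (- (b * rr p v)) * sin (u * rr p v))).
 { intros u v. apply is_derive_unique. unfold f. auto_derive. auto. ring. }
 replace (- BW p b x W) with (RInt (fun t => Derive (fun u => f u t) x) 0 W).
 2:{ rewrite (RInt_ext _ (fun t => opp (rr p t * exp (- (b * rr p t)) * sin (x * rr p t)))).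
     rewrite (RInt_opp (V:=R_CompleteNormedModule)). reflexivity. apply exRI; intros; cont.
     intros; rewrite HD; reflexivity. }
 apply (is_derive_RInt_param f 0 W x).
 - apply filter_forall. intros x0 t _. unfold f. auto_derive. auto.
 - intros t _. apply (continuity_2d_pt_ext (fun u v => - (rr p v * exp (- (b * rr p v)) * sin (u * rr p v)))).
   intros; rewrite HD; auto.
   apply continuity_2d_pt_opp. apply continuity_2d_pt_mult. apply c2d_v. cont.
   apply (continuity_1d_2d_pt_comp sin (fun u v => u * rr p v)). apply derivable_continuous_pt, derivable_pt_sin.
   apply continuity_2d_pt_mult. apply continuity_2d_pt_id1. apply c2d_v. cont.
 - apply filter_forall. intros; apply exRI; intros; unfold f; cont.
Qed.

Lemma dSW p b W x : 0 < p -> is_derive (fun x => SW p b x W) x (AW p b x W).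
Proof. intros hp.
 set (f := fun u t => exp (- (b * rr p t)) * sin (u * rr p t)).
 assert (HD : forall u v, Derive (fun z => f z v) u = rr p v * exp (- (b * rr p v)) * cos (u * rr p v)).
 { intros u v. apply is_derive_unique. unfold f. auto_derive. auto. ring. }
 replace (AW p b x W) with (RInt (fun t => Derive (fun u => f u t) x) 0 W).
 2:{ unfold AW. apply RInt_ext. intros; rewrite HD; reflexivity. }
 apply (is_derive_RInt_param f 0 W x).
 - apply filter_forall. intros x0 t _. unfold f. auto_derive. auto.
 - intros t _. apply (continuity_2d_pt_ext (fun u v => rr p v * exp (- (b * rr p v)) * cos (u * rr p v))).
   intros; rewrite HD; auto.
   apply continuity_2d_pt_mult. apply c2d_v. cont.
   apply (continuity_1d_2d_pt_comp cos (fun u v => u * rr p v)). apply derivable_continuous_pt, derivable_pt_cos.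
   apply continuity_2d_pt_mult. apply continuity_2d_pt_id1. apply c2d_v. cont.
 - apply filter_forall. intros; apply exRI; intros; unfold f; cont.
Qed.


Lemma RInt_abs_bound p b (g : R -> R) W : 0 < p -> 0 <= W -> (forall x, continuity_pt g x) ->
  (forall w, Rabs (g w) <= exp (- (b * rr p w))) -> Rabs (RInt g 0 W) <= PP p b W.
Proof. intros hp hW Hg Hb. eapply Rle_trans. apply abs_RInt_le; auto. apply exRI; auto.
 unfold PP. apply RInt_le; auto.
 apply exRI; intros; apply (continuity_pt_comp g Rabs); auto. apply Rcontinuity_abs.
 apply exRI; intros; cont. Qed.

Lemma abs_le_inv x a : Rabs x <= a -> - a <= x <= a.
Proof. intros H. generalize (Rle_abs x) (Rle_abs (- x)). rewrite Rabs_Ropp. lra. Qed.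

Lemma RInt_mono (h : R -> R) : (forall x, continuity_pt h x) -> (forall x, 0 <= h x) ->
  forall v w, 0 <= v <= w -> RInt h 0 v <= RInt h 0 w.
Proof. intros Hc Hp v w [Hv Hvw]. assert (0 <= RInt h v w).
 { apply RInt_ge_0; auto. apply exRI; auto. }
 rewrite <- RInt_diff in H; auto. lra. Qed.

Lemma lim_int p b G (g : R -> R) : 0 < p -> 0 < b -> IsGamma p G -> (forall x, continuity_pt g x) ->
  (forall w, Rabs (g w) <= exp (- (b * rr p w))) -> exists L, lim_inf (fun W => RInt g 0 W) L.
Proof. intros hp hb hG Hg Hb.
 set (h := fun w => exp (- (b * rr p w)) + g w).
 assert (Hh : forall x, continuity_pt h x) by (intros; unfold h; apply cp_plus; auto; cont).
 destruct (mono_lim (fun W => RInt h 0 W) (2 * (p * G / Rpower b p))) as [L1 HL1].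
 { apply RInt_mono; auto. intros x; unfold h. generalize (abs_le_inv _ _ (Hb x)). lra. }
 { intros w Hw. apply Rle_trans with (RInt (fun w => 2 * exp (- (b * rr p w))) 0 w).
   apply RInt_le; auto. apply exRI; auto. apply exRI; intros; cont.
   intros x _. unfold h. generalize (abs_le_inv _ _ (Hb x)). lra.
   rewrite (RInt_scal (V:=R_CompleteNormedModule) (fun w => exp (- (b * rr p w)))).
   2:{ apply exRI; intros; cont. }
   unfold scal; simpl; unfold mult; simpl. fold (PP p b w).
   generalize (PP_bound p G b w hp hb hG). lra. }
 destruct (mono_lim (PP p b) (p * G / Rpower b p)) as [L2 HL2].
 { intros; apply PP_le; lra. }
 { intros; left; apply PP_bound; auto. }
 exists (L1 - L2). apply (lim_ext (fun W => RInt h 0 W - PP p b W) _ _ 0).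
 { intros W _. unfold h, PP. rewrite <- (Rplus_0_l (RInt g 0 W)) at 1.
   replace (RInt (fun w => exp (- (b * rr p w)) + g w) 0 W) with
     (RInt (fun w => exp (- (b * rr p w))) 0 W + RInt g 0 W). ring.
   symmetry. apply (RInt_plus (V:=R_CompleteNormedModule)); apply exRI; intros; auto; cont. }
 apply lim_minus; auto.
Qed.

Lemma decay p b : 0 < p -> 0 < b -> lim_inf (fun W => W * exp (- (b * rr p W))) 0.
Proof. intros hp hb eps Heps.
 set (c := b / (p + 1)). assert (Hc : 0 < c) by (unfold c; apply Rdiv_lt_0_compat; lra).
 set (k := Rpower c (p + 1)). assert (Hk : 0 < k) by apply Rpower_pos.
 exists (Rpower (/ (k * eps)) p). intros W HW.
 assert (HW0 : 0 < W) by (generalize (Rpower_pos (/ (k * eps)) p); lra).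
 set (R := rr p W). assert (HR : 0 < R) by (apply rr_gt0; auto).
 assert (HWR : W = Rpower R p) by (unfold R; rewrite Rpower_rr; auto).
 assert (HR2 : / (k * eps) <= R).
 { unfold R. rewrite <- (rr_Rpower p (/ (k * eps))); auto. apply rr_le; auto.
   apply Rinv_0_lt_compat, Rmult_lt_0_compat; auto. }
 assert (He : k * Rpower R (p + 1) < exp (b * R)).
 { assert (E1 : c * R < exp (c * R)) by (generalize (exp_ineq1 (c * R)); intros H; assert (c * R <> 0) by nra; specialize (H H0); lra).
   assert (E2 : Rpower (c * R) (p + 1) < Rpower (exp (c * R)) (p + 1)).
   { apply Rlt_Rpower_l. lra. split; auto. nra. }
   unfold k. rewrite Rpower_mult_distr; auto.
   replace (exp (b * R)) with (Rpower (exp (c * R)) (p + 1)). auto.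
   unfold Rpower. rewrite ln_exp. f_equal. unfold c. field. lra. }
 rewrite Rminus_0_r. rewrite Rabs_pos_eq by (left; apply Rmult_lt_0_compat; auto; apply exp_pos).
 fold R. rewrite HWR.
 assert (HRp : Rpower R (p + 1) = Rpower R p * R) by (rewrite Rpower_plus, Rpower_1; auto).
 rewrite HRp in He.
 assert (Hpos : 0 < Rpower R p) by apply Rpower_pos.
 rewrite exp_Ropp. apply Rmult_lt_reg_r with (exp (b * R)). apply exp_pos.
 rewrite Rmult_assoc, Rinv_l by (apply Rgt_not_eq, exp_pos). rewrite Rmult_1_r.
 apply Rle_lt_trans with (eps * (k * (Rpower R p * R))).
 - assert (1 <= k * eps * R).
   { apply Rmult_le_reg_l with (/ (k * eps)). apply Rinv_0_lt_compat; nra.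
     rewrite <- Rmult_assoc, Rinv_l by nra. lra. }
   nra.
 - apply Rmult_lt_compat_l; auto.
Qed.

Definition Err p b x W :=
  2 * p * (x * (SW p b x W * (W * (exp (- (b * rr p W)) * sin (x * rr p W))) + CW p b x W * (W * (exp (- (b * rr p W)) * cos (x * rr p W))))
   + b * (CW p b x W * (W * (exp (- (b * rr p W)) * sin (x * rr p W))) - SW p b x W * (W * (exp (- (b * rr p W)) * cos (x * rr p W))))).

Definition MWf p b x W := (CW p b x W ^ 2 + SW p b x W ^ 2) * Rpower (b * b + x * x) p.

Lemma MW_derive p b W x : 0 < p -> 0 < b ->
  is_derive (fun x => MWf p b x W) x (Rpower (b * b + x * x) p / (b * b + x * x) * Err p b x W).
Proof. intros hp hb. unfold MWf.
 assert (HY : 0 < b * b + x * x) by nra.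
 assert (HRY : Rpower (b * b + x * x) (p - 1) = Rpower (b * b + x * x) p / (b * b + x * x)).
 { unfold Rminus. rewrite Rpower_plus, Rpower_Ropp, Rpower_1 by auto. reflexivity. }
 replace (Rpower (b * b + x * x) p / (b * b + x * x) * Err p b x W) with
   ((INR 2 * (- BW p b x W) * CW p b x W ^ Init.Nat.pred 2 + INR 2 * AW p b x W * SW p b x W ^ Init.Nat.pred 2) * Rpower (b * b + x * x) p
    + (CW p b x W ^ 2 + SW p b x W ^ 2) * scal (2 * x) (p * Rpower (b * b + x * x) (p - 1))).
 - apply (Derive.is_derive_mult (fun x => CW p b x W ^ 2 + SW p b x W ^ 2) (fun x => Rpower (b * b + x * x) p)).
   + apply (is_derive_plus (fun x => CW p b x W ^ 2) (fun x => SW p b x W ^ 2)).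
     apply (is_derive_pow (fun x => CW p b x W)). apply dCW; auto.
     apply (is_derive_pow (fun x => SW p b x W)). apply dSW; auto.
   + apply (is_derive_comp (fun y => Rpower y p) (fun x => b * b + x * x)).
     apply is_derive_Reals, derivable_pt_lim_power; auto. auto_derive. auto. ring.
 - rewrite HRY. unfold scal; simpl; unfold mult; simpl. unfold Err.
   rewrite (IBP_c p b x hp W), (IBP_s p b x hp W). field. split; lra.
Qed.

Lemma abs_mul_le u v a c : Rabs u <= a -> Rabs v <= c -> Rabs (u * v) <= a * c.
Proof. intros. rewrite Rabs_mult. apply Rmult_le_compat; auto; apply Rabs_pos. Qed.

Lemma Err_bound p b x W Bd m : 0 < p -> 0 < b -> 0 <= W ->
  Rabs (CW p b x W) <= Bd -> Rabs (SW p b x W) <= Bd -> W * exp (- (b * rr p W)) <= m ->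
  Rabs (Err p b x W) <= 2 * p * ((Rabs x + b) * (2 * Bd * m)).
Proof. intros hp hb hW HC HS Hm.
 set (e := exp (- (b * rr p W))) in *.
 assert (Hc0 : Rabs (W * (e * cos (x * rr p W))) <= m).
 { rewrite !Rabs_mult. generalize (COS_bound (x * rr p W)); intros Hcb.
   assert (Rabs (cos (x * rr p W)) <= 1) by (apply Rabs_le; lra).
   rewrite (Rabs_pos_eq W) by auto. rewrite (Rabs_pos_eq e) by (unfold e; left; apply exp_pos).
   assert (0 <= Rabs (cos (x * rr p W))) by apply Rabs_pos.
   assert (0 < e) by (unfold e; apply exp_pos). assert (0 <= W * e) by nra.
   apply Rle_trans with (W * e); [|auto]. rewrite <- Rmult_assoc. rewrite <- (Rmult_1_r (W * e)) at 2. apply Rmult_le_compat_l; auto. }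
 assert (Hs0 : Rabs (W * (e * sin (x * rr p W))) <= m).
 { rewrite !Rabs_mult. generalize (SIN_bound (x * rr p W)); intros Hcb.
   assert (Rabs (sin (x * rr p W)) <= 1) by (apply Rabs_le; lra).
   rewrite (Rabs_pos_eq W) by auto. rewrite (Rabs_pos_eq e) by (unfold e; left; apply exp_pos).
   assert (0 <= Rabs (sin (x * rr p W))) by apply Rabs_pos.
   assert (0 < e) by (unfold e; apply exp_pos). assert (0 <= W * e) by nra.
   apply Rle_trans with (W * e); [|auto]. rewrite <- Rmult_assoc. rewrite <- (Rmult_1_r (W * e)) at 2. apply Rmult_le_compat_l; auto. }
 unfold Err. fold e.
 set (s0 := W * (e * sin (x * rr p W))) in *. set (c0 := W * (e * cos (x * rr p W))) in *.
 set (C := CW p b x W) in *. set (S := SW p b x W) in *.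
 assert (H1 := abs_mul_le _ _ _ _ HS Hs0). assert (H2 := abs_mul_le _ _ _ _ HC Hc0).
 assert (H3 := abs_mul_le _ _ _ _ HC Hs0). assert (H4 := abs_mul_le _ _ _ _ HS Hc0).
 assert (A1 : Rabs (S * s0 + C * c0) <= 2 * (Bd * m)) by (eapply Rle_trans; [apply Rabs_triang|lra]).
 assert (A2 : Rabs (C * s0 - S * c0) <= 2 * (Bd * m)) by (eapply Rle_trans; [apply Rabs_triang|rewrite Rabs_Ropp; lra]).
 assert (A3 := abs_mul_le _ _ _ _ (Rle_refl (Rabs x)) A1).
 assert (A4 : Rabs (b * (C * s0 - S * c0)) <= b * (2 * (Bd * m))).
 { apply abs_mul_le; auto. rewrite Rabs_pos_eq; lra. }
 rewrite Rabs_mult. rewrite (Rabs_pos_eq (2 * p)) by lra. apply Rmult_le_compat_l. lra.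
 eapply Rle_trans. apply Rabs_triang. lra.
Qed.

Lemma CW_bound p b G x W : 0 < p -> 0 < b -> IsGamma p G -> 0 <= W ->
  Rabs (CW p b x W) <= p * G / Rpower b p.
Proof. intros hp hb hG hW. left. eapply Rle_lt_trans. apply (RInt_abs_bound p b); auto.
 intros; cont. intros w. rewrite Rabs_mult, Rabs_pos_eq by (left; apply exp_pos).
 generalize (COS_bound (x * rr p w)); intros. assert (Rabs (cos (x * rr p w)) <= 1) by (apply Rabs_le; lra).
 assert (0 < exp (- (b * rr p w))) by apply exp_pos. nra.
 apply PP_bound; auto. Qed.

Lemma SW_bound p b G x W : 0 < p -> 0 < b -> IsGamma p G -> 0 <= W ->
  Rabs (SW p b x W) <= p * G / Rpower b p.
Proof. intros hp hb hG hW. left. eapply Rle_lt_trans. apply (RInt_abs_bound p b); auto.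
 intros; cont. intros w. rewrite Rabs_mult, Rabs_pos_eq by (left; apply exp_pos).
 generalize (SIN_bound (x * rr p w)); intros. assert (Rabs (sin (x * rr p w)) <= 1) by (apply Rabs_le; lra).
 assert (0 < exp (- (b * rr p w))) by apply exp_pos. nra.
 apply PP_bound; auto. Qed.

Lemma M_eq p b G X Cx Sx C0 S0 : 0 < p -> 0 < b -> IsGamma p G ->
  lim_inf (fun W => CW p b X W) Cx -> lim_inf (fun W => SW p b X W) Sx ->
  lim_inf (fun W => CW p b 0 W) C0 -> lim_inf (fun W => SW p b 0 W) S0 ->
  (Cx ^ 2 + Sx ^ 2) * Rpower (b * b + X * X) p = (C0 ^ 2 + S0 ^ 2) * Rpower (b * b + 0 * 0) p.
Proof.
 intros hp hb hG HCx HSx HC0 HS0.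
 assert (Lx : lim_inf (fun W => MWf p b X W) ((Cx ^ 2 + Sx ^ 2) * Rpower (b * b + X * X) p)).
 { apply (lim_ext (fun W => (CW p b X W * CW p b X W + SW p b X W * SW p b X W) * Rpower (b * b + X * X) p) _ _ 0).
   intros; unfold MWf; ring.
   replace ((Cx ^ 2 + Sx ^ 2) * Rpower (b * b + X * X) p) with ((Cx * Cx + Sx * Sx) * Rpower (b * b + X * X) p) by ring.
   apply lim_mult. apply lim_plus; apply lim_mult; auto. apply lim_const. }
 assert (L0 : lim_inf (fun W => MWf p b 0 W) ((C0 ^ 2 + S0 ^ 2) * Rpower (b * b + 0 * 0) p)).
 { apply (lim_ext (fun W => (CW p b 0 W * CW p b 0 W + SW p b 0 W * SW p b 0 W) * Rpower (b * b + 0 * 0) p) _ _ 0).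
   intros; unfold MWf; ring.
   replace ((C0 ^ 2 + S0 ^ 2) * Rpower (b * b + 0 * 0) p) with ((C0 * C0 + S0 * S0) * Rpower (b * b + 0 * 0) p) by ring.
   apply lim_mult. apply lim_plus; apply lim_mult; auto. apply lim_const. }
 set (Bd := p * G / Rpower b p).
 set (K0 := Rpower (b * b + X * X) p / (b * b) * (2 * p * ((Rabs X + b) * (2 * Bd))) * Rabs X).
 assert (Ld : lim_inf (fun W => MWf p b X W - MWf p b 0 W) 0).
 { apply (lim_squeeze0 _ (fun W => K0 * (W * exp (- (b * rr p W)))) 0).
   2:{ replace 0 with (K0 * 0) by ring. apply lim_scal. apply decay; auto. }
   intros W HW.
   set (m := W * exp (- (b * rr p W))).
   replace (K0 * m) with (Rpower (b * b + X * X) p / (b * b) * (2 * p * ((Rabs X + b) * (2 * Bd * m))) * Rabs (X - 0)).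
   2:{ unfold K0. rewrite Rminus_0_r. ring. }
   apply (bounded_variation (fun x => MWf p b x W) (fun x => Rpower (b * b + x * x) p / (b * b + x * x) * Err p b x W)).
   intros t Ht. rewrite !Rminus_0_r in Ht. split. apply MW_derive; auto.
   assert (Htt : t * t <= X * X).
   { assert (E1 : Rabs t * Rabs t = t * t) by (rewrite <- Rabs_mult; apply Rabs_pos_eq; nra).
     assert (E2 : Rabs X * Rabs X = X * X) by (rewrite <- Rabs_mult; apply Rabs_pos_eq; nra).
     rewrite <- E1, <- E2. apply Rmult_le_compat; auto; apply Rabs_pos. }
   assert (HYt : 0 < b * b + t * t) by nra.
   assert (HE := Err_bound p b t W Bd m hp hb HW (CW_bound p b G t W hp hb hG HW) (SW_bound p b G t W hp hb hG HW) (Rle_refl _)).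
   rewrite Rabs_mult. rewrite (Rabs_pos_eq (Rpower (b * b + t * t) p / (b * b + t * t))).
   2:{ left; apply Rdiv_lt_0_compat; auto; apply Rpower_pos. }
   apply Rmult_le_compat.
   + left; apply Rdiv_lt_0_compat; auto; apply Rpower_pos.
   + apply Rabs_pos.
   + unfold Rdiv. apply Rmult_le_compat. left; apply Rpower_pos. left; apply Rinv_0_lt_compat; auto.
     apply Rle_Rpower_l; lra. apply Rinv_le_contravar; nra.
   + eapply Rle_trans; [apply HE|]. apply Rmult_le_compat_l. lra. apply Rmult_le_compat_r.
     assert (0 <= Bd) by (unfold Bd; apply Rle_trans with (Rabs (CW p b 0 0)); [apply Rabs_pos|apply CW_bound; auto; lra]).
     assert (0 <= m) by (unfold m; apply Rmult_le_pos; auto; left; apply exp_pos). nra. lra. }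
 assert (Lm := lim_minus _ _ _ _ Lx L0).
 assert (E := lim_unique _ _ _ Lm Ld). lra.
Qed.

Lemma RInt_cscal c (g : R -> R) W : (forall x, continuity_pt g x) -> RInt (fun w => c * g w) 0 W = c * RInt g 0 W.
Proof. intros Hg. apply (RInt_scal (V:=R_CompleteNormedModule) g). apply exRI; auto. Qed.

Lemma lim_CW p b G x : 0 < p -> 0 < b -> IsGamma p G -> exists L, lim_inf (fun W => CW p b x W) L.
Proof. intros hp hb hG. apply (lim_int p b G); auto. intros; cont.
 intros w. rewrite Rabs_mult, Rabs_pos_eq by (left; apply exp_pos).
 generalize (COS_bound (x * rr p w)); intros. assert (Rabs (cos (x * rr p w)) <= 1) by (apply Rabs_le; lra).
 assert (0 < exp (- (b * rr p w))) by apply exp_pos. nra. Qed.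

Lemma lim_SW p b G x : 0 < p -> 0 < b -> IsGamma p G -> exists L, lim_inf (fun W => SW p b x W) L.
Proof. intros hp hb hG. apply (lim_int p b G); auto. intros; cont.
 intros w. rewrite Rabs_mult, Rabs_pos_eq by (left; apply exp_pos).
 generalize (SIN_bound (x * rr p w)); intros. assert (Rabs (sin (x * rr p w)) <= 1) by (apply Rabs_le; lra).
 assert (0 < exp (- (b * rr p w))) by apply exp_pos. nra. Qed.

Lemma Req_conv (a b : R) : a = b -> a = b.
Proof. auto. Qed.

Lemma exp_half_be b r : exp (- ((b + / 2) * r)) * exp (/ 2 * r) = exp (- (b * r)).
Proof. rewrite <- exp_plus. f_equal. field. Qed.

Theorem mainTheorem7 (p b G : R) (f : R -> R)
  (hp : 0 < p) (hb : 1 <= b) (hG : IsGamma p G)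
  (hf_in : forall s, 0 <= s < 1 -> 1 <= f s /\ D_rel p b G (ln (f s)) s)
  (hf_out : forall s, ~ (0 <= s < 1) -> f s = 0) :
  (exists I, improper_int (fun s => Rpower (Rabs (f s)) (1 + (0 - 1) / 2)) 0 1 I) /\
  (exists gamma, 0 < gamma /\
     forall (sg : bool) (x : R), exists Re Im,
       improper_int (m_integrand_re (fun y => y) 0 f sg x) 0 1 Re /\
       improper_int (m_integrand_im (fun y => y) 0 f sg x) 0 1 Im /\
       gamma * Rpower (1 + Rabs x) (- p) <= sqrt (Re ^ 2 + Im ^ 2)).
Proof.
 assert (hb0 : 0 < b) by lra.
 assert (hG0 : 0 < G) by (apply (G_pos p G); auto).
 set (be := b + / 2). assert (hbe : 0 < be) by (unfold be; lra).
 set (K := Rpower (2 * b + 1) p / (Rpower 2 p * G)).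
 assert (HK : K = Rpower be p / G).
 { unfold K. replace (2 * b + 1) with (be * 2) by (unfold be; field). rewrite <- (Rpower_mult_distr be 2 p) by lra.
   field. split; [lra| apply Rgt_not_eq, Rpower_pos]. }
 assert (hK : 0 < K) by (rewrite HK; apply Rdiv_lt_0_compat; auto; apply Rpower_pos).
 assert (HE1 : forall w, EE p be K w < 1).
 { intros w. unfold EE. generalize (PP_bound p G be w hp hbe hG). intros H.
   apply Rlt_le_trans with (K / p * (p * G / Rpower be p)).
   apply Rmult_lt_compat_l; auto. apply Rdiv_lt_0_compat; auto.
   right. rewrite HK. field. repeat split; (lra || (apply Rgt_not_eq, Rpower_pos)). }
 set (tau := fun s => if Rlt_dec 0 (ln (f s)) then Rpower (ln (f s)) p else 0).
 assert (Hspec : forall s, 0 <= s < 1 -> EE p be K (tau s) = s /\ ln (f s) = rr p (tau s) /\ 0 < f s).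
 { intros s Hs. destruct (hf_in s Hs) as [Hf1 HD].
   assert (Hl : 0 <= ln (f s)) by (rewrite <- ln_1; destruct Hf1 as [H|H]; [left; apply ln_increasing; lra|rewrite H; lra]).
   unfold tau. destruct (Rlt_dec 0 (ln (f s))) as [Hp|Hn].
   - split; [|split; [|lra]].
     + transitivity (Rpower (2 * b + 1) p / (Rpower 2 p * G) * (PP p (b + / 2) (Rpower (ln (f s)) p) / p)).
       unfold EE, K, be. field. repeat split; (lra || (apply Rgt_not_eq, Rpower_pos)). symmetry. apply Drel_pos; auto.
     + rewrite rr_Rpower; auto.
   - assert (E : ln (f s) = 0) by lra. rewrite E in HD. apply Drel_0 in HD.
     rewrite EE_0, rr_nonpos by lra. repeat split; auto; lra. }
 assert (Htau : forall s, 0 <= s < 1 -> EE p be K (tau s) = s) by (intros; apply Hspec; auto).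
 assert (Hfs : forall s, 0 <= s < 1 -> f s = exp (rr p (tau s))).
 { intros s Hs. destruct (Hspec s Hs) as [_ [E Hpos]]. rewrite <- E, exp_ln; auto. }
 assert (Hpw : forall s a, 0 <= s < 1 -> Rpower (Rabs (f s)) a = exp (a * rr p (tau s))).
 { intros s a Hs. destruct (Hspec s Hs) as [_ [E Hpos]]. rewrite Rabs_pos_eq by lra. unfold Rpower. rewrite E. auto. }
 destruct (lim_CW p b G 0 hp hb0 hG) as [C0 HC0].
 assert (HS0 : lim_inf (fun W => SW p b 0 W) 0).
 { apply (lim_ext (fun _ => 0) _ _ 0). intros W _. unfold SW.
   rewrite (RInt_ext _ (fun _ => 0)). rewrite RInt_const. unfold scal; simpl; unfold mult; simpl. ring.
   intros. rewrite Rmult_0_l, sin_0. apply Rmult_0_r. apply lim_const. }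
 assert (HC0pos : 0 < C0).
 { apply Rlt_le_trans with (CW p b 0 1).
   - unfold CW. rewrite (RInt_ext _ (fun w => exp (- (b * rr p w)))). fold (PP p b 1).
     rewrite <- (PP_0 p b). apply PP_lt; auto; lra. intros; rewrite Rmult_0_l, cos_0; apply Rmult_1_r.
   - apply (lim_ge (fun W => CW p b 0 W)); auto; [|lra]. unfold CW. apply RInt_mono. intros; cont.
     intros; rewrite Rmult_0_l, cos_0, Rmult_1_r; left; apply exp_pos. }
 assert (Hcont_tau : True) by auto.
 split.
 - exists (K / p * C0). apply (GEN p be K tau _ (fun w => exp (/ 2 * rr p w))); auto.
   + intros s Hs. rewrite Hpw by lra. f_equal. field.
   + intros; cont.
   + apply (lim_ext (fun W => K / p * CW p b 0 W) _ _ 0). 2: apply lim_scal; auto.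
     intros W _. unfold CW. rewrite <- RInt_cscal by (intros; cont). apply RInt_ext. intros w _.
     unfold be. rewrite Rmult_assoc, exp_half_be, Rmult_0_l, cos_0, Rmult_1_r. reflexivity.
 - exists (K / p * C0). split. apply Rmult_lt_0_compat; auto. apply Rdiv_lt_0_compat; auto.
   intros sg x.
   destruct (lim_CW p b G x hp hb0 hG) as [Cx HCx].
   destruct (lim_SW p b G x hp hb0 hG) as [Sx HSx].
   exists (K / p * Cx), (K / p * (- Sx)). split; [|split].
   + apply (GEN p be K tau _ (fun w => exp (/ 2 * rr p w) * cos (x * rr p w))); auto.
     * intros s Hs. unfold m_integrand_re. rewrite Hpw by lra.
       destruct (Hspec s ltac:(lra)) as [_ [E Hpos]].
       assert (Hsg : (if sg then Rsgn (f s) else 1) = 1).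
       { destruct sg; auto. unfold Rsgn. destruct (Rlt_dec 0 (f s)); auto; lra. }
       rewrite Hsg. rewrite Rabs_pos_eq by lra. rewrite E, (Hfs s) by lra.
       rewrite Rmult_1_r. f_equal. rewrite <- exp_plus. f_equal. field.
     * intros; cont.
     * apply (lim_ext (fun W => K / p * CW p b x W) _ _ 0). 2: apply lim_scal; auto.
       intros W _. unfold CW. rewrite <- RInt_cscal by (intros; cont). apply RInt_ext. intros w _.
       rewrite <- exp_half_be. fold be. apply Req_conv. ring.
   + apply (GEN p be K tau _ (fun w => - (exp (/ 2 * rr p w) * sin (x * rr p w)))); auto.
     * intros s Hs. unfold m_integrand_im. rewrite Hpw by lra.
       destruct (Hspec s ltac:(lra)) as [_ [E Hpos]].
       assert (Hsg : (if sg then Rsgn (f s) else 1) = 1).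
       { destruct sg; auto. unfold Rsgn. destruct (Rlt_dec 0 (f s)); auto; lra. }
       rewrite Hsg. rewrite Rabs_pos_eq by lra. rewrite E, (Hfs s) by lra.
       rewrite Rmult_1_r. f_equal. f_equal. rewrite <- exp_plus. f_equal. field.
     * intros; cont.
     * apply (lim_ext (fun W => K / p * - SW p b x W) _ _ 0).
       2:{ apply lim_scal. replace (- Sx) with (-1 * Sx) by ring.
           apply (lim_ext (fun W => -1 * SW p b x W) _ _ 0). intros; ring. apply lim_scal; auto. }
       intros W _. unfold SW. rewrite <- (RInt_opp (V:=R_CompleteNormedModule)) by (apply exRI; intros; cont).
       rewrite <- RInt_cscal by (intros; unfold opp; simpl; cont). apply RInt_ext. intros w _.
       unfold opp; simpl. rewrite <- exp_half_be. fold be. apply Req_conv. ring.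
   +
     assert (HM := M_eq p b G x Cx Sx C0 0 hp hb0 hG HCx HSx HC0 HS0).
     set (N := Cx ^ 2 + Sx ^ 2) in *.
     assert (HN0 : 0 <= N) by (unfold N; nra).
     set (Y := b * b + x * x) in *.
     assert (HY : 0 < Y) by (unfold Y; nra).
     assert (HYp : 0 < Rpower Y p) by apply Rpower_pos.
     set (R1 := Rpower (1 + Rabs x) (- p)).
     assert (HR1 : 0 < R1) by apply Rpower_pos.
     assert (Hax : 0 <= Rabs x) by apply Rabs_pos.
     assert (Hxx : Rabs x * Rabs x = x * x) by (rewrite <- Rabs_mult; apply Rabs_pos_eq; nra).
     assert (Hb1 : 0 <= (b * b - 1) * (x * x)) by (apply Rmult_le_pos; nra).
     assert (Hb2 : 0 <= b * b * Rabs x) by (apply Rmult_le_pos; nra).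
     assert (HYb : Y <= b * b * ((1 + Rabs x) * (1 + Rabs x))).
     { unfold Y. replace (b * b * ((1 + Rabs x) * (1 + Rabs x))) with (b * b + 2 * (b * b * Rabs x) + b * b * (Rabs x * Rabs x)) by ring. rewrite Hxx. nra. }
     assert (HR1Y : R1 * R1 * Rpower Y p <= Rpower (b * b + 0 * 0) p).
     { unfold R1. rewrite Rpower_Ropp. replace (b * b + 0 * 0) with (b * b) by ring.
       assert (H1p : 0 < Rpower (1 + Rabs x) p) by apply Rpower_pos.
       apply Rmult_le_reg_l with (Rpower (1 + Rabs x) p * Rpower (1 + Rabs x) p). nra.
       replace (Rpower (1 + Rabs x) p * Rpower (1 + Rabs x) p * (/ Rpower (1 + Rabs x) p * / Rpower (1 + Rabs x) p * Rpower Y p))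
         with (Rpower Y p) by (field; lra).
       rewrite Rpower_mult_distr, Rpower_mult_distr by nra.
       apply Rle_Rpower_l; lra. }
     assert (HNl : C0 * R1 * (C0 * R1) <= N).
     { apply Rmult_le_reg_r with (Rpower Y p); auto. rewrite HM.
       replace (C0 * R1 * (C0 * R1) * Rpower Y p) with (C0 ^ 2 * (R1 * R1 * Rpower Y p)) by ring.
       replace ((C0 ^ 2 + 0 ^ 2) * Rpower (b * b + 0 * 0) p) with (C0 ^ 2 * Rpower (b * b + 0 * 0) p) by ring.
       apply Rmult_le_compat_l; auto. nra. }
     replace ((K / p * Cx) ^ 2 + (K / p * - Sx) ^ 2) with ((K / p) ^ 2 * N) by (unfold N; ring).
     assert (HKp : 0 < K / p) by (apply Rdiv_lt_0_compat; auto).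
     rewrite sqrt_mult_alt by nra. rewrite sqrt_pow2 by lra.
     rewrite Rmult_assoc. apply Rmult_le_compat_l. lra.
     rewrite <- (sqrt_square (C0 * R1)) by nra. apply sqrt_le_1_alt. auto.
Qed.
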